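(* Consider the SR2 method (described in the context) applied to $\min_x F(x) := f(x) + \mathcal{R}(x)$, and suppose Assumptions (A1), (A3) and (A5) of the context hold. Let $0<\epsilon<1$ and let $t(\epsilon)$ be the first iteration with $\mathbb{E}_{\hat\xi_{t}}[\|s^\xi\|^2]\le\epsilon^2$. Then $$\mathbb{E}_{\hat\xi_{t(\epsilon)}}\big[\operatorname{dist}\big(0,\hat\partial F(x_{t(\epsilon)}+s^\xi)\big)^2\big] \le C\epsilon^2 + 3\,\mathbb{E}_{\hat\xi_{t(\epsilon)}}\big[\|\nabla f(x_{t(\epsilon)}) - g^\xi\|^2\big],$$ where $C = 3(L^2+\sigma_{\max}^2)$.
   Context: Problem: $F(x) = f(x) + \mathcal{R}(x)$ with $f(x) = \frac{1}{N}\sum_{i=1}^N f_i(x)$, $f_i:\mathbb{R}^n\to\mathbb{R}$ differentiable, and $\mathcal{R}:\mathbb{R}^n \to \mathbb{R}\cup\{\pm\infty\}$. For a nonempty sample $\xi \subseteq \{1,\dots,N\}$ set $f(x,\xi) := \frac{1}{|\xi|}\sum_{j\in\xi} f_j(x)$ and $\nabla f(x,\xi) := \frac{1}{|\xi|}\sum_{j\in\xi}\nabla f_j(x)$. A function $\mathcal{R}$ is proper if it never equals $-\infty$ and is finite somewhere; it is prox-bounded if there are $x$ and $\mu>0$ with $\inf_w \{\tfrac{1}{2}\mu^{-1}\|x-w\|^2 + \mathcal{R}(w)\} > -\infty$; the supremum of such $\mu$ is its prox-boundedness threshold. The Fréchet subdifferential $\hat\partial\phi(\bar x)$ of $\phi$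 at a point $\bar x$ where $\phi$ is finite is the set of $v$ with $\liminf_{x\to\bar x, x\ne\bar x} \frac{\phi(x)-\phi(\bar x)-v^T(x-\bar x)}{\|x-\bar x\|}\ge 0$. SR2 algorithm: parameters $0<\eta_1\le\eta_2<1$, $0<\gamma_3\le 1<\gamma_1\le\gamma_2$, a starting point $x_0$ where $\mathcal{R}$ is finite, $\sigma_0 \ge \sigma_{\min} > 0$. At iteration $t$: draw a random sample $\xi_t$, set $g_t := \nabla f(x_t,\xi_t)$, $\psi(s;x_t) := f(x_t,\xi_t) + g_t^T s + \mathcal{R}(x_t+s)$, $m(s;x_t,\sigma_t) := \psi(s;x_t) + \tfrac12\sigma_t\|s\|^2$, and compute $s_t \in \operatorname{argmin}_s m(s;x_t,\sigma_t)$ (if the sample is deemed inadequate, $s_t$ is set to $0$). Compute $\Delta F_t := F(x_t) - F(x_t+s_t)$, $\Delta\psi_t := \psi(0;x_t)-\psi(s_t;x_t)$, $\rho_t := \Delta F_t/\Delta\psi_t$ (with the convention $\rho_t = 0$ when $\Delta\psi_t = +\infty$). If $\rho_t \ge \eta_1$ (a successful iteration) set $x_{t+1} = x_t + s_t$, else $x_{t+1}=x_t$. Then choose $\sigma_{t+1} \in [\max(\sigma_{\min},\gamma_3\sigma_t),\sigma_t]$ if $\rho_t\ge\eta_2$; $\sigma_{t+1}\in[\sigma_t,\gamma_1\sigma_t]$ if $\eta_1\le\rho_t<\eta_2$; $\sigma_{t+1}\in[\gamma_1\sigma_t,\gamma_2\sigma_t]$ if $\rho_t<\eta_1$. Assumptions.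 (A1): there is $L>0$ with $\|\nabla f(x)-\nabla f(y)\|\le L\|x-y\|$ for all $x,y$; $\mathcal{R}$ is proper and lower semicontinuous everywhere, and $s\mapsto\mathcal{R}(x_t+s)$ is prox-bounded, with threshold $\lambda_{x_t}$, for every iterate $x_t$. (A3): there is $\kappa_m>0$ such that for all $t$, $|f(x_t+s_t)-f(x_t)-g_t^Ts_t| \le \kappa_m\|s_t\|^2$; moreover $\mathbb{E}_\xi[f(x_t,\xi)] = f(x_t)$ and $\mathbb{E}_\xi[g_t] = \nabla f(x_t)$. (A5): there is $\lambda>0$ with $\lambda_{x_t}\ge\lambda$ for all iterates $x_t$. Notation: $\sigma_{\max}$ is a constant with $\sigma_t\le\sigma_{\max}$ for all $t$ (e.g. $\max\{\sigma_0,\gamma_2\sigma_{\textup{succ}}\}$ with $\sigma_{\textup{succ}} := \max(2\kappa_m/(1-\eta_2),1/\lambda)$). For a sample $\xi$ drawn at iterate $x_t$, $g^\xi := \nabla f(x_t,\xi)$ and $s^\xi$ is the corresponding step; $\mathbb{E}_{\hat\xi_t}$ denotes expectation over the distribution of samples $\xi$ that yield a successful iteration given $x_t$. *)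

(* Defs.v *)
From HB Require Import structures.
From mathcomp Require Import all_boot all_order all_algebra.
From mathcomp Require Import all_classical all_reals all_analysis.
Set Implicit Arguments. Unset Strict Implicit. Unset Printing Implicit Defensive.
Import Order.TTheory GRing.Theory Num.Theory.
Local Open Scope ring_scope.
Local Open Scope classical_set_scope.

Section SR2Defs.
Variables (R : realType) (n N : nat).
Notation vec := 'rV[R]_n.

Definition dotv (u v : vec) : R := \sum_(i < n) u ord0 i * v ord0 i.
Definition enorm (u : vec) : R := Num.sqrt (dotv u u).

Definition has_gradient (h : vec -> R) (gh : vec -> vec) : Prop :=
  forall x, forall e, 0 < e -> exists2 d, 0 < d & forall y, enorm (y - x) < d ->
    `|h y - h x - dotv (gh x) (y - x)| <= e * enorm (y - x).

Definition fsample (fs : 'I_N -> vec -> R) (xi : {set 'I_N}) (x : vec) : R :=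
  (#|xi|%:R)^-1 * \sum_(j in xi) fs j x.
Definition gsample (gs : 'I_N -> vec -> vec) (xi : {set 'I_N}) (x : vec) : vec :=
  (#|xi|%:R)^-1 *: \sum_(j in xi) gs j x.
Definition favg (fs : 'I_N -> vec -> R) (x : vec) : R :=
  (N%:R)^-1 * \sum_(j < N) fs j x.
Definition gavg (gs : 'I_N -> vec -> vec) (x : vec) : vec :=
  (N%:R)^-1 *: \sum_(j < N) gs j x.

Definition Ffun (fs : 'I_N -> vec -> R) (Rg : vec -> \bar R) (x : vec) : \bar R :=
  ((favg fs x)%:E + Rg x)%E.

Definition proper_fun (phi : vec -> \bar R) : Prop :=
  (forall x, phi x != -oo%E) /\ (exists x, phi x \is a fin_num).

Definition lsc_fun (phi : vec -> \bar R) : Prop :=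
  forall x (a : R), (a%:E < phi x)%E ->
    exists2 d, 0 < d & forall y, enorm (y - x) < d -> (a%:E < phi y)%E.

Definition prox_bounded_at (phi : vec -> \bar R) (x : vec) (mu : R) : Prop :=
  (-oo < ereal_inf [set ((2^-1 * mu^-1 * enorm (x - w) ^+ 2)%:E + phi w)%E | w in setT])%E.
Definition prox_bounded (phi : vec -> \bar R) : Prop :=
  exists x mu, 0 < mu /\ prox_bounded_at phi x mu.
Definition prox_threshold (phi : vec -> \bar R) : \bar R :=
  ereal_sup [set mu%:E | mu in [set mu | 0 < mu /\ exists x, prox_bounded_at phi x mu]].

Definition psi (fs : 'I_N -> vec -> R) (gs : 'I_N -> vec -> vec) (Rg : vec -> \bar R)
    (xi : {set 'I_N}) (x s : vec) : \bar R :=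
  ((fsample fs xi x + dotv (gsample gs xi x) s)%:E + Rg (x + s)%R)%E.
Definition model fs gs Rg xi x (sigma : R) (s : vec) : \bar R :=
  (psi fs gs Rg xi x s + (sigma / 2 * enorm s ^+ 2)%:E)%E.

Definition rho fs gs Rg (xi : {set 'I_N}) (x s : vec) : \bar R :=
  let dF := (Ffun fs Rg x - Ffun fs Rg (x + s)%R)%E in
  let dpsi := (psi fs gs Rg xi x 0%R - psi fs gs Rg xi x s)%E in
  if dpsi == +oo%E then 0%E else (dF * ((fine dpsi)^-1)%:E)%E.

(* Frechet subdifferential (empty where phi is not finite) *)
Definition frechet_subdiff (phi : vec -> \bar R) (xb : vec) : set vec :=
  [set v | phi xb \is a fin_num /\
     forall e, 0 < e -> exists2 d, 0 < d & forall y, 0 < enorm (y - xb) < d ->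
       ((fine (phi xb) + dotv v (y - xb) - e * enorm (y - xb))%:E <= phi y)%E].

(* dist(0, S) (= +oo if S empty) and its square *)
Definition dist0 (S : set vec) : \bar R := ereal_inf [set (enorm v)%:E | v in S].
Definition dist0_sq (S : set vec) : \bar R := (dist0 S * dist0 S)%E.

Definition Econd (p : {set 'I_N} -> R) (S : pred {set 'I_N}) (X : {set 'I_N} -> R) : R :=
  (\sum_(xi | S xi) p xi * X xi) / (\sum_(xi | S xi) p xi).
Definition EcondE (p : {set 'I_N} -> R) (S : pred {set 'I_N}) (X : {set 'I_N} -> \bar R)
  : \bar R :=
  ((\sum_(xi | S xi) ((p xi)%:E * X xi)) * ((\sum_(xi | S xi) p xi)^-1)%:E)%E.

End SR2Defs.

(* Main.v *)
Require Import Defs.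
From HB Require Import structures.
From mathcomp Require Import all_boot all_order all_algebra.
From mathcomp Require Import all_classical all_reals all_analysis.
From mathcomp Require Import lra ring.
Import Order.TTheory GRing.Theory Num.Theory.
Local Open Scope ring_scope.

Set Implicit Arguments. Unset Strict Implicit.

Section Helpers.
Variables (R : realType) (n : nat).
Local Notation vec := 'rV[R]_n.

Lemma dotvC (u v : vec) : dotv u v = dotv v u.
Proof. by apply: eq_bigr => i _; rewrite mulrC. Qed.
Lemma dotvDl (u v w : vec) : dotv (u + v) w = dotv u w + dotv v w.
Proof. by rewrite /dotv -big_split; apply: eq_bigr => i _; rewrite mxE mulrDl. Qed.
Lemma dotvNl (u w : vec) : dotv (- u) w = - dotv u w.
Proof. by rewrite /dotv -sumrN; apply: eq_bigr => i _; rewrite mxE mulNr. Qed.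
Lemma dotvZl a (u w : vec) : dotv (a *: u) w = a * dotv u w.
Proof. by rewrite /dotv mulr_sumr; apply: eq_bigr => i _; rewrite mxE mulrA. Qed.
Lemma dotv0l (w : vec) : dotv 0 w = 0.
Proof. by rewrite /dotv big1 // => i _; rewrite mxE mul0r. Qed.
Lemma dotvBl (u v w : vec) : dotv (u - v) w = dotv u w - dotv v w.
Proof. by rewrite dotvDl dotvNl. Qed.
Lemma dotvDr (u v w : vec) : dotv w (u + v) = dotv w u + dotv w v.
Proof. by rewrite dotvC dotvDl !(dotvC w). Qed.
Lemma dotv_suml (I : finType) (F : I -> vec) (w : vec) :
  dotv (\sum_i F i) w = \sum_i dotv (F i) w.
Proof. exact: (big_morph (fun u => dotv u w) (fun a b => dotvDl a b w) (dotv0l w)). Qed.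
Lemma dotv_ge0 (u : vec) : 0 <= dotv u u.
Proof. by apply: sumr_ge0 => i _; rewrite -expr2 sqr_ge0. Qed.
Lemma enorm_ge0 (u : vec) : 0 <= enorm u.
Proof. exact: sqrtr_ge0. Qed.
Lemma enorm_sq (u : vec) : enorm u ^+ 2 = dotv u u.
Proof. by rewrite sqr_sqrtr // dotv_ge0. Qed.
Lemma dotv3 (a b c : vec) :
  dotv (a + b + c) (a + b + c) <= 3 * (dotv a a + dotv b b + dotv c c).
Proof.
rewrite /dotv -!big_split /= mulr_sumr; apply: ler_sum => i _; rewrite !mxE.
set A := a ord0 i; set B := b ord0 i; set C := c ord0 i.
have h1 := sqr_ge0 (A - B); have h2 := sqr_ge0 (B - C); have h3 := sqr_ge0 (A - C).
rewrite !expr2 in h1 h2 h3. nra.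
Qed.

Lemma fin_min (I : finType) (P : I -> R -> Prop) :
  (forall i, exists2 d, 0 < d & P i d) ->
  exists2 d, 0 < d & forall i, exists2 di, d <= di & P i di.
Proof.
move=> H.
have /choice [dd Hdd] : forall i, exists d, 0 < d /\ P i d.
  by move=> i; have [d d0 Pd] := H i; exists d.
pose d := foldr (fun i acc => Num.min (dd i) acc) 1 (enum I).
have : 0 < d /\ forall i, i \in enum I -> d <= dd i.
  rewrite /d; elim: (enum I) => [|j l [IH1 IH2]] /=; first by split.
  split; first by rewrite lt_min IH1 andbT; case: (Hdd j).
  move=> i; rewrite inE => /orP[/eqP->|il]; first by rewrite ge_min lexx.
  by rewrite ge_min IH2 // orbT.
move=> [d0 Hd]; exists d => // i; exists (dd i); first by apply: Hd; rewrite mem_enum.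
by case: (Hdd i).
Qed.

Lemma favg_grad N (fs : 'I_N -> vec -> R) gs :
  (forall i, has_gradient (fs i) (gs i)) -> has_gradient (favg fs) (gavg gs).
Proof.
move=> H x e e0.
have [d d0 Hd] := @fin_min _ (fun i d => forall y, enorm (y - x) < d ->
    `|fs i y - fs i x - dotv (gs i x) (y - x)| <= e * enorm (y - x))
   (fun i => H i x e e0).
exists d => // y yd.
have Hi : forall i, `|fs i y - fs i x - dotv (gs i x) (y - x)| <= e * enorm (y - x).
  move=> i; have [di ddi Pi] := Hd i; apply: Pi; exact: lt_le_trans ddi.
rewrite /favg /gavg dotvZl dotv_suml -mulrBr -mulrBr -sumrB -sumrB normrM.
have -> : `|N%:R^-1| = N%:R^-1 :> R by rewrite ger0_norm // invr_ge0.
apply: le_trans (_ : N%:R^-1 * \sum_(i < N) e * enorm (y - x) <= _).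
  apply: ler_wpM2l; first by rewrite invr_ge0.
  by apply: le_trans (ler_norm_sum _ _ _) _; apply: ler_sum => i _.
rewrite sumr_const card_ord -[e * enorm (y - x) *+ N]mulr_natl.
have z0 : 0 <= e * enorm (y - x) by rewrite mulr_ge0 ?enorm_ge0 // ltW.
have [->|Nn0] := eqVneq N 0%N; first by rewrite mul0r mulr0.
by rewrite mulKf ?pnatr_eq0.
Qed.

End Helpers.

Lemma subgrad (R : realType) (n N : nat) (fs : 'I_N -> 'rV[R]_n -> R) gs Rg
  (smp : {set 'I_N}) (xt s : 'rV[R]_n) (sig : R) :
  has_gradient (favg fs) (gavg gs) -> 0 < sig ->
  (forall s', (model fs gs Rg smp xt sig s <= model fs gs Rg smp xt sig s')%E) ->
  Rg (xt + s) \is a fin_num -> (forall y, Rg y != -oo%E) ->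
  frechet_subdiff (Ffun fs Rg) (xt + s)
    (gavg gs (xt + s) - gsample gs smp xt - sig *: s).
Proof.
move=> Hg sig0 Hmin fR Rninf; split; first by rewrite /Ffun fin_numD fR.
move=> e e0.
have [d1 d10 Hd1] := Hg (xt + s) (e / 2) ltac:(by rewrite divr_gt0).
exists (Num.min d1 (e / sig)); first by rewrite lt_min d10 divr_gt0.
move=> y /andP[u0]; rewrite lt_min => /andP[ud1 ud2].
have Hm := Hmin (y - xt).
rewrite /model /psi [xt + (y - xt)]addrC subrK in Hm.
have Hf := Hd1 y ud1.
rewrite /Ffun; case Ry: (Rg y) => [r| |]; last first.
- by move: (Rninf y); rewrite Ry.
- by rewrite addey // leey.
rewrite -(fineK fR) in Hm *; rewrite Ry in Hm.
set Rs := fine (Rg (xt + s)) in Hm *.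
rewrite -!EFinD lee_fin in Hm; rewrite -EFinD /= lee_fin.
set u := y - (xt + s) in Hf ud2 u0 *.
have yxt : y - xt = s + u by rewrite /u [RHS]addrC opprD addrA subrK.
rewrite yxt in Hm; clearbody u.
have nu0 := enorm_ge0 u.
have Hu2 : sig * enorm u ^+ 2 <= e * enorm u.
  rewrite expr2 mulrA; apply: ler_wpM2r => //.
  by rewrite mulrC -ler_pdivlMr // ltW.
move: Hf; rewrite ler_norml => /andP[Hf _].
rewrite !enorm_sq in Hm Hu2.
rewrite !dotvDl !dotvDr (dotvC u s) in Hm.
rewrite !dotvBl dotvZl.
set a := dotv u u in Hm Hu2.
lra.
Qed.

Lemma rho_succ (R : realType) (n N : nat) (fs : 'I_N -> 'rV[R]_n -> R) gs Rg
  (smp : {set 'I_N}) (xt s : 'rV[R]_n) (eta1 : R) :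
  0 < eta1 -> (eta1%:E <= rho fs gs Rg smp xt s)%E ->
  s != 0 /\ Rg (xt + s) \is a fin_num.
Proof.
move=> e0; rewrite /rho.
case E: (psi fs gs Rg smp xt 0 - psi fs gs Rg smp xt s)%E => [r| |] /=;
  last 2 first.
- by rewrite lee_fin leNgt e0.
- by rewrite invr0 mule0 lee_fin leNgt e0.
move=> H.
have r0 : r != 0 by apply: contraTneq H => ->; rewrite invr0 mule0 lee_fin -ltNge.
have : (psi fs gs Rg smp xt 0 - psi fs gs Rg smp xt s)%E \is a fin_num by rewrite E.
rewrite fin_numB => /andP[h0 hs]; split.
- apply: contraNneq r0 => s0; move: E; rewrite s0 subee // => -[<-] //.
- by move: hs; rewrite /psi fin_numD => /andP[].
Qed.

Lemma dotvNN (R : realType) n (u : 'rV[R]_n) : dotv (- u) (- u) = dotv u u.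
Proof. by rewrite dotvNl dotvC dotvNl opprK. Qed.
Lemma dotvZZ (R : realType) n a (u : 'rV[R]_n) : dotv (a *: u) (a *: u) = a ^+ 2 * dotv u u.
Proof. by rewrite dotvZl dotvC dotvZl mulrA expr2. Qed.


Unset Implicit Arguments.

Theorem theorem4 (R : realType) (n N : nat)
  (fs : 'I_N -> 'rV[R]_n -> R) (gs : 'I_N -> 'rV[R]_n -> 'rV[R]_n)
  (Rg : 'rV[R]_n -> \bar R)
  (eta1 eta2 gamma1 gamma2 gamma3 sigma_min : R)
  (x : nat -> 'rV[R]_n) (sigma : nat -> R)
  (p : nat -> {set 'I_N} -> R) (xi : nat -> {set 'I_N})
  (adequate : nat -> {set 'I_N} -> bool) (step : nat -> {set 'I_N} -> 'rV[R]_n)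
  (L kappa_m lambda sigma_max eps : R) (teps : nat) :
  (* differentiability of the f_i, with gradients gs i *)
  (forall i, has_gradient (fs i) (gs i)) ->
  (* algorithm parameters *)
  0 < eta1 -> eta1 <= eta2 -> eta2 < 1 ->
  0 < gamma3 -> gamma3 <= 1 -> 1 < gamma1 -> gamma1 <= gamma2 ->
  0 < sigma_min -> sigma_min <= sigma 0 ->
  Rg (x 0) \is a fin_num ->
  (* sampling distribution at iteration t (over nonempty samples) and drawn sample *)
  (forall t smp, 0 <= p t smp) -> (forall t, \sum_(smp : {set 'I_N}) p t smp = 1) ->
  (forall t smp, 0 < p t smp -> smp != finset.set0) ->
  (forall t, 0 < p t (xi t)) ->
  (* step s^xi computed at iterate x_t for sample xi: a minimizer of the model,
     or 0 if the sample is deemed inadequate *)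
  (forall t smp, adequate t smp ->
     forall s, (model fs gs Rg smp (x t) (sigma t) (step t smp)
                <= model fs gs Rg smp (x t) (sigma t) s)%E) ->
  (forall t smp, ~~ adequate t smp -> step t smp = 0) ->
  (* iterate update *)
  (forall t, x t.+1 = if (eta1%:E <= rho fs gs Rg (xi t) (x t) (step t (xi t)))%E
                      then x t + step t (xi t) else x t) ->
  (* regularization parameter update *)
  (forall t, let r := rho fs gs Rg (xi t) (x t) (step t (xi t)) in
     ((eta2%:E <= r)%E -> Num.max sigma_min (gamma3 * sigma t) <= sigma t.+1 <= sigma t) /\
     ((eta1%:E <= r)%E -> (r < eta2%:E)%E -> sigma t <= sigma t.+1 <= gamma1 * sigma t) /\
     ((r < eta1%:E)%E -> gamma1 * sigma t <= sigma t.+1 <= gamma2 * sigma t)) ->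
  (* (A1) *)
  0 < L ->
  (forall y z, enorm (gavg gs y - gavg gs z) <= L * enorm (y - z)) ->
  proper_fun Rg -> lsc_fun Rg ->
  (forall t, prox_bounded (fun s => Rg (x t + s))) ->
  (* (A3) *)
  0 < kappa_m ->
  (forall t, `|favg fs (x t + step t (xi t)) - favg fs (x t)
               - dotv (gsample gs (xi t) (x t)) (step t (xi t))|
             <= kappa_m * enorm (step t (xi t)) ^+ 2) ->
  (forall t, \sum_(smp : {set 'I_N}) p t smp * fsample fs smp (x t) = favg fs (x t)) ->
  (forall t, \sum_(smp : {set 'I_N}) p t smp *: gsample gs smp (x t) = gavg gs (x t)) ->
  (* (A5) *)
  0 < lambda ->
  (forall t, (lambda%:E <= prox_threshold (fun s => Rg (x t + s)%R))%E) ->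
  (* sigma_max *)
  (forall t, sigma t <= sigma_max) ->
  (* epsilon and t(epsilon): first iteration with E_succ[||s^xi||^2] <= eps^2 *)
  0 < eps -> eps < 1 ->
  Econd (p teps) (fun smp => (eta1%:E <= rho fs gs Rg smp (x teps) (step teps smp))%E)
        (fun smp => enorm (step teps smp) ^+ 2) <= eps ^+ 2 ->
  (forall t, (t < teps)%N ->
     eps ^+ 2 < Econd (p t) (fun smp => (eta1%:E <= rho fs gs Rg smp (x t) (step t smp))%E)
                      (fun smp => enorm (step t smp) ^+ 2)) ->
  (EcondE (p teps) (fun smp => (eta1%:E <= rho fs gs Rg smp (x teps) (step teps smp))%E)
     (fun smp => dist0_sq (frechet_subdiff (Ffun fs Rg) (x teps + step teps smp)))
   <= (3 * (L ^+ 2 + sigma_max ^+ 2) * eps ^+ 2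
       + 3 * Econd (p teps) (fun smp => (eta1%:E <= rho fs gs Rg smp (x teps) (step teps smp))%E)
               (fun smp => enorm (gavg gs (x teps) - gsample gs smp (x teps)) ^+ 2))%:E)%E.
Proof.
move=> Hgrad He1 He12 He2 Hg3 Hg31 Hg1 Hg12 Hsmin Hs0 HRx0 Hp0 Hp1 Hpne Hpxi
  Hadq Hinad Hx Hsig HL0 HL Hprop Hlsc Hpb Hk0 Hk Hfs Hgs Hl0 Hlt Hsmax
  eps0 eps1 Heps Hbefore.
have Hsigpos : forall t, sigma_min <= sigma t.
  elim=> // t IH.
  have := Hsig t => /= -[h1 [h2 h3]].
  set r := rho fs gs Rg (xi t) (x t) (step t (xi t)) in h1 h2 h3.
  case: (leP eta1%:E r) => H1.
    case: (leP eta2%:E r) => H2.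
      by have /andP[+ _] := h1 H2; apply: le_trans; rewrite le_max lexx.
    by have /andP[+ _] := h2 H1 H2; apply: le_trans.
  have /andP[+ _] := h3 H1; apply: le_trans.
  have : 0 <= (gamma1 - 1) * sigma t by rewrite mulr_ge0 ?subr_ge0 ?ltW //; lra.
  lra.
have Hf := favg_grad Hgrad.
set P := (fun smp => (eta1%:E <= rho fs gs Rg smp (x teps) (step teps smp))%E).
set A := 3 * (L ^+ 2 + sigma_max ^+ 2).
set G := (fun smp => enorm (gavg gs (x teps) - gsample gs smp (x teps)) ^+ 2).
set S2 := (fun smp => enorm (step teps smp) ^+ 2).
have pw : forall smp, P smp ->
   (dist0_sq (frechet_subdiff (Ffun fs Rg) (x teps + step teps smp))
     <= (A * S2 smp + 3 * G smp)%:E)%E.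
  move=> smp Ps.
  have [sn0 fR] := rho_succ He1 Ps.
  have adq : adequate teps smp.
    by apply/negPn/negP => /Hinad s0; rewrite s0 eqxx in sn0.
  set s := step teps smp in sn0 fR *.
  set g := gsample gs smp (x teps).
  have sigp : 0 < sigma teps by apply: lt_le_trans (Hsigpos teps).
  have Hv := subgrad Hf sigp (Hadq teps smp adq) fR (fun y => (Hprop.1 y)).
  set v := (gavg gs (x teps + s) - g - sigma teps *: s) in Hv.
  have d0 : (0 <= dist0 (frechet_subdiff (Ffun fs Rg) (x teps + s)))%E.
    by apply/ereal_infP => _ [w _ <-]; rewrite lee_fin enorm_ge0.
  have dv : (dist0 (frechet_subdiff (Ffun fs Rg) (x teps + s)) <= (enorm v)%:E)%E.
    by apply: ereal_inf_lbound; exists v.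
  apply: le_trans (lee_pmul d0 d0 dv dv) _.
  rewrite -EFinM lee_fin -expr2 enorm_sq.
  have -> : v = (gavg gs (x teps + s) - gavg gs (x teps))
              + (gavg gs (x teps) - g) + (- (sigma teps *: s)).
    by rewrite /v addrA subrK.
  apply: le_trans (dotv3 _ _ _) _.
  rewrite dotvNN dotvZZ /G /S2 -/s -/g !enorm_sq.
  have ha := HL (x teps + s) (x teps).
  rewrite addrAC subrr add0r in ha.
  have hna := enorm_ge0 (gavg gs (x teps + s) - gavg gs (x teps)).
  have hns := enorm_ge0 s.
  rewrite -!enorm_sq.
  have hsig := Hsmax teps.
  have hsig0 := ltW sigp.
  rewrite /A.
  have : enorm (gavg gs (x teps + s) - gavg gs (x teps)) ^+ 2 <= L ^+ 2 * enorm s ^+ 2.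
    have hLs : 0 <= L * enorm s by rewrite mulr_ge0 // ltW.
    have h1 : 0 <= L * enorm s - enorm (gavg gs (x teps + s) - gavg gs (x teps)) by rewrite subr_ge0.
    have := mulr_ge0 h1 (addr_ge0 hLs hna).
    rewrite !expr2; nra.
  have : sigma teps ^+ 2 <= sigma_max ^+ 2.
    have h1 : 0 <= sigma_max - sigma teps by rewrite subr_ge0.
    have := mulr_ge0 h1 (addr_ge0 hsig0 (le_trans hsig0 hsig)).
    rewrite !expr2; nra.
  have := sqr_ge0 (enorm s).
  nra.
rewrite /EcondE /Econd -/P -/G -/S2.
set D := \sum_(smp | P smp) p teps smp.
have D0 : 0 <= D^-1 by rewrite invr_ge0 sumr_ge0.
have H1 : (\sum_(smp | P smp) (p teps smp)%:E * dist0_sq (frechet_subdiff (Ffun fs Rg) (x teps + step teps smp))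
    <= (\sum_(smp | P smp) p teps smp * (A * S2 smp + 3 * G smp))%:E)%E.
  rewrite -sumEFin; apply: lee_sum => smp Ps; rewrite EFinM.
  by apply: lee_wpmul2l; [rewrite lee_fin | exact: pw].
apply: le_trans (lee_wpmul2r _ H1) _; first by rewrite lee_fin.
rewrite -EFinM lee_fin.
have -> : \sum_(smp | P smp) p teps smp * (A * S2 smp + 3 * G smp)
   = A * \sum_(smp | P smp) p teps smp * S2 smp + 3 * \sum_(smp | P smp) p teps smp * G smp.
  rewrite !mulr_sumr -big_split; apply: eq_bigr => smp _.
  by rewrite mulrDr mulrCA [p teps smp * (3 * _)]mulrCA.
rewrite mulrDl -!mulrA lerD2r; apply: ler_wpM2l => //.
apply: ler_wpM2l; first by rewrite addr_ge0 ?sqr_ge0.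
exact: Heps.
Qed.
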